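(* Let $\phi:V\to V$ be a continuous coherency preserver that is not degenerate. Then the map $\Phi:V\times\mathcal{Q}\to\mathcal{Q}$, $(a,p)\mapsto\varphi_a(p)$, is continuous.
   Context: Fix an integer $n\ge4$, let $V=\mathbb{R}^n$ with its standard topology and $q(x_1,\dots,x_n)=x_n^2-\sum_{k=1}^{n-1}x_k^2$. Points $x,y$ are coherent when $q(x-y)=0$; $\mathcal{C}(a)=\{m: q(m-a)=0\}$. A coherency preserver is a map $\phi:V\to V$ with $q(b-a)=0\Rightarrow q(\phi(b)-\phi(a))=0$; it is degenerate when its range is included in some $\mathcal{C}(c)$. Let $\mathcal{Q}=\{(x_1,\dots,x_{n-1},1): \sum_{k=1}^{n-1}x_k^2=1\}$ (with the subspace topology). For a non-degenerate continuous coherency preserver $\phi$, for every $a\in V$ and $p\in\mathcal{Q}$ there is a unique $p'\in\mathcal{Q}$ with $\phi(a+\mathbb{R}p)\subset\phi(a)+\mathbb{R}p'$; one sets $\varphi_a(p):=p'$, which defines $\varphi_a:\mathcal{Q}\to\mathcal{Q}$. *)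

(* Defs.v *)
(* V = R^n is modelled as row vectors 'rV[R]_n over
   an abstract R : realType, with its standard (normed) topology. *)
From HB Require Import structures.
From mathcomp Require Import all_boot all_order all_algebra.
From mathcomp Require Import all_classical all_reals all_analysis.
Set Implicit Arguments. Unset Strict Implicit. Unset Printing Implicit Defensive.
Import Order.TTheory GRing.Theory Num.Theory.
Import numFieldNormedType.Exports.
Local Open Scope classical_set_scope.
Local Open Scope ring_scope.

Section Defs.
Variables (R : realType) (n : nat).
Notation V := 'rV[R]_n.

(* q(x) = x_n^2 - sum_{k=1}^{n-1} x_k^2 ; the last coordinate has index n.-1 *)
Definition qform (x : V) : R :=
  \sum_(i < n) (if (i : nat) == n.-1 then 1 else -1) * x 0 i ^+ 2.

Definition coherent (x y : V) : Prop := qform (x - y) = 0.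

Definition lightcone (a : V) : set V := [set m | qform (m - a) = 0].

Definition coherency_preserver (phi : V -> V) : Prop :=
  forall a b : V, qform (b - a) = 0 -> qform (phi b - phi a) = 0.

Definition degenerate (phi : V -> V) : Prop :=
  exists c : V, range phi `<=` lightcone c.

Definition Qset : set V :=
  [set x | (forall i : 'I_n, (i : nat) = n.-1 -> x 0 i = 1) /\
           \sum_(i < n | (i : nat) != n.-1) x 0 i ^+ 2 = 1].

Definition maps_line_into (phi : V -> V) (a p p' : V) : Prop :=
  forall t : R, exists s : R, phi (a + t *: p) = phi a + s *: p'.

(* varphi_a(p) := the (unique, by the paper) p' in Q with
   phi(a + R p) ⊂ phi(a) + R p'; chosen via classical choice. *)
Definition varphi (phi : V -> V) (a p : V) : V :=
  xget 0 [set p' | Qset p' /\ maps_line_into phi a p p'].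

End Defs.

(* Main.v *)
Require Import Defs.
From HB Require Import structures.
From mathcomp Require Import all_boot all_order all_algebra.
From mathcomp Require Import all_classical all_reals all_analysis.
From mathcomp Require Import ring lra.
Import Order.TTheory GRing.Theory Num.Theory.
Import numFieldNormedType.Exports.
Local Open Scope classical_set_scope.
Local Open Scope ring_scope.

Section Alg.
Context {R : realType} {n : nat} {ln : 'I_n} (Hln : (ln : nat) = n.-1).
Notation V := 'rV[R]_n.

Definition sg (i : 'I_n) : R := if (i : nat) == n.-1 then 1 else -1.
Definition bil (x y : V) : R := \sum_(i < n) sg i * (x 0 i * y 0 i).
Definition spat (x y : V) : R := \sum_(i < n | (i : nat) != n.-1) x 0 i * y 0 i.

Lemma qformE (x : V) : qform x = \sum_(i < n) sg i * (x 0 i * x 0 i).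
Proof. by apply: eq_bigr => i _; rewrite expr2. Qed.

Lemma qformD (x y : V) : qform (x + y) = qform x + 2 * bil x y + qform y.
Proof.
rewrite !qformE /bil mulr_sumr -!big_split /=; apply: eq_bigr => i _.
rewrite !mxE; ring.
Qed.

Lemma qformZ (t : R) (x : V) : qform (t *: x) = t ^+ 2 * qform x.
Proof.
rewrite !qformE mulr_sumr; apply: eq_bigr => i _; rewrite !mxE; ring.
Qed.

Lemma qformN (x : V) : qform (- x) = qform x.
Proof. by rewrite -scaleN1r qformZ; rewrite sqrrN expr1n mul1r. Qed.

Lemma eqlnE (i : 'I_n) : ((i : nat) == n.-1) = (i == ln).
Proof. by rewrite -Hln. Qed.

Lemma bil_split (x y : V) : bil x y = x 0 ln * y 0 ln - spat x y.
Proof.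
rewrite /bil /spat (bigD1 ln) //= /sg Hln eqxx mul1r; congr (_ + _).
rewrite -sumrN; apply: eq_big => i; first by rewrite eqlnE.
by rewrite eqlnE => /negbTE ->; rewrite mulN1r.
Qed.

Lemma qform_split (x : V) : qform x = x 0 ln ^+ 2 - spat x x.
Proof. by rewrite qformE -/(bil x x) bil_split expr2. Qed.

Lemma spat_ge0 (x : V) : 0 <= spat x x.
Proof. by apply: sumr_ge0 => i _; rewrite -expr2 sqr_ge0. Qed.

Lemma spat0 (x : V) : spat x x = 0 -> forall i : 'I_n, (i : nat) != n.-1 -> x 0 i = 0.
Proof.
move=> /psumr_eq0P H i Hi; apply/eqP; rewrite -sqrf_eq0 expr2.
by apply/eqP; apply: H => // j _; rewrite -expr2 sqr_ge0.
Qed.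

Lemma null_last (w : V) : qform w = 0 -> w != 0 -> w 0 ln != 0.
Proof.
move=> qw; apply: contraNN => /eqP b0; apply/eqP/rowP => i; rewrite mxE.
have : spat w w = 0.
  by move: qw; rewrite qform_split b0 expr2 mul0r; lra.
move/spat0 => H; have [->|ne] := eqVneq i ln; first exact: b0.
by apply: H; rewrite eqlnE.
Qed.

Lemma null_parallel (u w : V) : qform u = 0 -> qform w = 0 ->
  qform (u - w) = 0 -> w != 0 -> u = (u 0 ln / w 0 ln) *: w.
Proof.
move=> qu qw quw w0; have b0 := null_last w qw w0.
have hb : bil u (- w) = 0.
  by move: quw; rewrite qformD qu qformN qw add0r addr0 => /eqP; rewrite mulf_eq0 /= pnatr_eq0 => /eqP.
have Huw : spat u w = u 0 ln * w 0 ln.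
  have e1 : spat u (- w) = - spat u w.
    by rewrite /spat -sumrN; apply: eq_bigr => i _; rewrite mxE mulrN.
  move: hb; rewrite bil_split e1 mxE mulrN; lra.
have Hu : spat u u = (u 0 ln) ^+ 2 by move: qu; rewrite qform_split => /eqP; rewrite subr_eq0 => /eqP.
have Hw : spat w w = (w 0 ln) ^+ 2 by move: qw; rewrite qform_split => /eqP; rewrite subr_eq0 => /eqP.
have S0 : \sum_(i < n | (i : nat) != n.-1) (u 0 i * (w 0 ln) - w 0 i * (u 0 ln)) ^+ 2 = 0.
  transitivity ((w 0 ln) ^+ 2 * spat u u - 2 * (u 0 ln) * (w 0 ln) * spat u w + (u 0 ln) ^+ 2 * spat w w);
    last by rewrite Hu Hw Huw; ring.
  rewrite /spat !mulr_sumr -sumrB -big_split /=; apply: eq_bigr => i _; ring.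
move/psumr_eq0P: S0 => S0.
apply/rowP => i; rewrite mxE.
have [->|ne] := eqVneq i ln; first by rewrite mulfVK.
have : (u 0 i * (w 0 ln) - w 0 i * (u 0 ln)) ^+ 2 = 0 by apply: S0; [move=> j _; exact: sqr_ge0|rewrite eqlnE].
move/eqP; rewrite sqrf_eq0 subr_eq0 => /eqP H.
by rewrite mulrAC [u 0 ln * _]mulrC -H mulfK.
Qed.

Lemma bilZr (x y : V) (t : R) : bil x (t *: y) = t * bil x y.
Proof. by rewrite /bil mulr_sumr; apply: eq_bigr => i _; rewrite !mxE; ring. Qed.

Lemma bilDl (x y z : V) : bil (x + y) z = bil x z + bil y z.
Proof. by rewrite /bil -big_split /=; apply: eq_bigr => i _; rewrite !mxE; ring. Qed.

Lemma bilZl (x y : V) (t : R) : bil (t *: x) y = t * bil x y.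
Proof. by rewrite /bil mulr_sumr; apply: eq_bigr => i _; rewrite !mxE; ring. Qed.

Definition dln : V := \row_j (if j == ln then 1 else 0).

Lemma bil_dln (p : V) : bil dln p = p 0 ln.
Proof.
rewrite bil_split /spat mxE eqxx mul1r big1 ?subr0 // => i.
by rewrite mxE eqlnE => /negbTE ->; rewrite mul0r.
Qed.

Lemma Q_null (r : V) : Qset r -> qform r = 0 /\ r 0 ln = 1.
Proof.
case=> H1 H2; have r1 : r 0 ln = 1 by apply: H1.
split=> //; rewrite qform_split r1 expr1n.
have -> : spat r r = 1 by rewrite -H2; apply: eq_bigr => i _; rewrite expr2.
by rewrite subrr.
Qed.

Section Phi.
Variable phi : V -> V.
Hypothesis cp : coherency_preserver phi.

Lemma line_coh (b r : V) (t s : R) : Qset r ->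
  qform (phi (b + t *: r) - phi (b + s *: r)) = 0.
Proof.
move=> /(Q_null r) [qr _]; apply: cp.
have -> : b + t *: r - (b + s *: r) = (t - s) *: r.
  by apply/rowP => i; rewrite !mxE; ring.
by rewrite qformZ qr mulr0.
Qed.

Lemma varphi_eq (b r : V) (t0 : R) : Qset r ->
  phi (b + t0 *: r) != phi b ->
  varphi phi b r = ((phi (b + t0 *: r) - phi b) 0 ln)^-1 *: (phi (b + t0 *: r) - phi b).
Proof.
move=> Qr; rewrite -subr_eq0; set w := phi (b + t0 *: r) - phi b => w0.
have qw : qform w = 0 by have := line_coh b r t0 0 Qr; rewrite scale0r addr0.
have b0 := null_last w qw w0.
apply: xget_unique; last first.
  move=> y [Qy /(_ t0) [s Hs]].
  have wE : w = s *: y by rewrite /w Hs addrC addKr.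
  have [_ y1] := Q_null y Qy.
  have -> : w 0 ln = s by rewrite wE mxE y1 mulr1.
  have s0 : s != 0 by move: w0; rewrite wE; apply: contraNN => /eqP ->; rewrite scale0r.
  by rewrite wE scalerA mulVf // scale1r.
split.
  split.
    move=> i Hi; have -> : i = ln by apply: val_inj; rewrite /= Hi Hln.
    by rewrite mxE mulVf.
  have Hw : spat w w = w 0 ln ^+ 2 by move: qw; rewrite qform_split => /eqP; rewrite subr_eq0 => /eqP.
  transitivity ((w 0 ln)^-1 ^+ 2 * spat w w).
    by rewrite /spat mulr_sumr; apply: eq_bigr => i _; rewrite mxE; ring.
  by rewrite Hw -exprMn mulVf // expr1n.
move=> t; set u := phi (b + t *: r) - phi b.
have qu : qform u = 0 by have := line_coh b r t 0 Qr; rewrite scale0r addr0.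
have quw : qform (u - w) = 0.
  by rewrite /u /w opprB addrA subrK; apply: line_coh.
have Hp := null_parallel u w qu qw quw w0.
exists (u 0 ln); rewrite scalerA -Hp /u [RHS]addrC subrK //.
Qed.

End Phi.
End Alg.

Section Top.
Context (R : realType) (n : nat).
Notation V := 'rV[R]_n.

Lemma cvg_bigsum (T : Type) (F : set_system T) {FF : Filter F} (I : Type)
  (r : seq I) (P : pred I) (h : I -> T -> R) (l : I -> R) :
  (forall i, h i @ F --> l i) ->
  (fun y => \sum_(i <- r | P i) h i y) @ F --> \sum_(i <- r | P i) l i.
Proof.
move=> H; elim: r => [|i r IH].
  have -> : (fun y => \sum_(i <- [::] | P i) h i y) = fun=> 0.
    by apply/funext => y; rewrite big_nil.
  rewrite big_nil; exact: cvg_cst.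
have -> : (fun y => \sum_(j <- i :: r | P j) h j y) =
   fun y => (if P i then h i y else 0) + \sum_(j <- r | P j) h j y.
  by apply/funext => y; rewrite big_cons; case: (P i); rewrite ?add0r.
rewrite big_cons; case: (P i).
  exact: cvgD.
rewrite -[X in _ --> X]add0r; apply: cvgD => //; exact: cvg_cst.
Qed.

Lemma cvg_qform (T : Type) (F : set_system T) {FF : Filter F} (f : T -> V) (l : V) :
  f @ F --> l -> qform (f y) @[y --> F] --> qform l.
Proof.
move=> Hf; rewrite /qform; apply: cvg_bigsum => i.
have Hc : (f y) 0 i @[y --> F] --> l 0 i.
  exact: (continuous_cvg _ (@coord_continuous R 1 n 0 i l) Hf).
apply: cvgMl_tmp; rewrite expr2.
exact: cvgM.
Qed.


Section Main.
Variables (ln : 'I_n) (Hln : (ln : nat) = n.-1).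
Variable phi : V -> V.
Hypothesis cphi : continuous phi.
Hypothesis cp : coherency_preserver phi.

Lemma nonconst (a p : V) : Qset p ->
  (forall t, phi (a + t *: p) = phi a) -> degenerate phi.
Proof.
move=> Qp Hc; have [qp p1] := Q_null Hln p Qp.
have key : forall m, bil (m - a) p != 0 -> qform (phi m - phi a) = 0.
  move=> m hb; set t := qform (m - a) / (2 * bil (m - a) p).
  rewrite -(Hc t); apply: cp.
  have -> : m - (a + t *: p) = (m - a) + (- t) *: p.
    by apply/rowP => i; rewrite !mxE; ring.
  rewrite qformD qformZ qp mulr0 addr0 bilZr /t; field.
  exact: hb.
exists (phi a) => _ [m _ <-]; rewrite /lightcone /=.
have [b0|bn0] := eqVneq (bil (m - a) p) 0; last exact: key.
pose g e := qform (phi (m + e *: (@dln R n ln)) - phi a).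
have ge : forall e, e != 0 -> g e = 0.
  move=> e e0; apply: key.
  have -> : m + e *: (@dln R n ln) - a = (m - a) + e *: (@dln R n ln).
    by apply/rowP => i; rewrite !mxE; ring.
  by rewrite bilDl bilZl (bil_dln Hln) b0 p1 add0r mulr1.
have gc : g e @[e --> (0 : R)^'] --> g 0.
  apply: cvg_qform; apply: cvgB; last exact: cvg_cst.
  apply: (continuous_cvg _ (cphi _)).
  apply: cvgD; first exact: cvg_cst.
  apply: cvgZr_tmp.
  exact: nbhs_dnbhs.
apply/eqP; apply/negPn/negP => gn0.
have g0 : g 0 = qform (phi m - phi a) by rewrite /g scale0r addr0.
have H1 : \forall e \near (0 : R)^', g e != 0.
  by apply: cvgr_neq0 gc _; rewrite g0.
have H2 := nbhs_dnbhs_neq (0 : R).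
have [e [/ge He1 He2]] := filter_ex (filterI H2 H1).
by move: He2; rewrite He1 eqxx.
Qed.

End Main.
End Top.

Theorem lemma4p2 (R : realType) (n : nat) (phi : 'rV[R]_n -> 'rV[R]_n) :
  (4 <= n)%N ->
  continuous phi ->
  coherency_preserver phi ->
  ~ degenerate phi ->
  {within [set: 'rV[R]_n] `*` @Qset R n,
     continuous (fun ap : 'rV[R]_n * 'rV[R]_n => varphi phi ap.1 ap.2)}.
Proof.
move=> n4 cphi cp ndeg.
have Hlt : (n.-1 < n)%N by rewrite ltn_predL; apply: leq_trans n4.
pose ln : 'I_n := Ordinal Hlt.
have Hln : (ln : nat) = n.-1 by [].
apply/subspace_continuousP => -[a p] [_ Qp] /=.
have [t0 Ht0] : exists t0, phi (a + t0 *: p) != phi a.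
  case: (pselect (exists t0, phi (a + t0 *: p) != phi a)) => // Hno.
  exfalso; apply: ndeg; apply: (@nonconst R n ln Hln phi cphi cp a p Qp) => t.
  by apply: contrapT => Ht; apply: Hno; exists t; apply/eqP.
pose W := fun y : 'rV[R]_n * 'rV[R]_n => phi (y.1 + t0 *: y.2) - phi y.1.
pose G := fun y => ((W y) 0 ln)^-1 *: W y.
have Wc : W @ nbhs (a, p) --> W (a, p).
  apply: cvgB.
    apply: (continuous_cvg _ (cphi _)); apply: cvgD; first exact: cvg_fst.
    by apply: cvgZ; [exact: cvg_cst | exact: cvg_snd].
  by apply: (continuous_cvg _ (cphi _)); exact: cvg_fst.
have W0 : W (a, p) != 0 by rewrite /W /= subr_eq0.
have qW : qform (W (a, p)) = 0.
  by have := line_coh Hln phi cp a p t0 0 Qp; rewrite scale0r addr0.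
have b0 := null_last Hln (W (a, p)) qW W0.
have Gc : G @ nbhs (a, p) --> G (a, p).
  apply: cvgZ => //; apply: cvgV => //.
  exact: (continuous_cvg _ (@coord_continuous R 1 n 0 ln _) Wc).
have Hnear : \forall y \near (a, p), W y != 0 by apply: cvgr_neq0 Wc W0.
have E : varphi phi a p = G (a, p) by apply: varphi_eq Hln phi cp a p t0 Qp Ht0.
have Heq : \forall y \near within ([set: 'rV[R]_n] `*` @Qset R n) (nbhs (a, p)),
    G y = varphi phi y.1 y.2.
  rewrite near_withinE; apply: filterS Hnear => -[b r] Wy [_ Qr] /=.
  by rewrite (varphi_eq Hln phi cp b r t0 Qr) //; move: Wy; rewrite /W /= subr_eq0.
rewrite /from_subspace /= E; apply: cvg_trans (near_eq_cvg Heq) _.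
exact: cvg_within_filter.
Qed.
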